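(* Let $n\geq 2$, let $F_n$ be the free group with free basis $x_1,\dots,x_n$, let $\varphi\in\mathrm{Aut}(F_n)$, and let $G_\varphi=F_n\rtimes\langle t\rangle$ be the semidirect product with an infinite cyclic group $\langle t\rangle$ in which conjugation by $t$ induces $\varphi$ on $F_n$. Let $A\in\mathrm{GL}_n(\mathbb{Z})$ be the matrix of the automorphism of $F_n/F_n'\cong\mathbb{Z}^n$ induced by $\varphi$, and let $E$ be the $n\times n$ identity matrix. If $A-E\in\mathrm{GL}_n(\mathbb{Z})$, then $\bigcap_{i=1}^{\infty}\gamma_i(G_\varphi)=F_n$, and in particular $G_\varphi$ is not residually nilpotent.
   Context: $\gamma_i(G)$ denotes the $i$-th term of the lower central series of $G$: $\gamma_1(G)=G$, $\gamma_{i+1}(G)=[\gamma_i(G),G]$. $F_n'$ is the commutator subgroup of $F_n$. A group is residually nilpotent if the intersection of its lower central series is trivial. *)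

(* Defs.v *)
From mathcomp Require Import all_boot all_order all_algebra.
Set Implicit Arguments. Unset Strict Implicit. Unset Printing Implicit Defensive.
Import Order.TTheory GRing.Theory Num.Theory.

Section FreeGroup.
Variable n : nat.

(* a letter (i, false) is x_i, (i, true) is x_i^-1 *)
Definition letter := ('I_n * bool)%type.

Definition cancels (a b : letter) : bool := (a.1 == b.1) && (a.2 != b.2).

Fixpoint reduced (w : seq letter) : bool :=
  match w with
  | a :: ((b :: _) as w') => ~~ cancels a b && reduced w'
  | _ => true
  end.

Definition red_cons (a : letter) (w : seq letter) : seq letter :=
  match w with
  | b :: w' => if cancels a b then w' else a :: w
  | [::] => [:: a]
  end.

Definition nf (w : seq letter) : seq letter := foldr red_cons [::] w.

Lemma reduced_behead a w : reduced (a :: w) -> reduced w.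
Proof. by case: w => //= b w /andP[]. Qed.

Lemma red_cons_reduced a w : reduced w -> reduced (red_cons a w).
Proof.
case: w => [|b w] //= Hw.
case: ifP => Hc; first exact: (reduced_behead Hw).
by rewrite /= Hc Hw.
Qed.

Lemma nf_reduced w : reduced (nf w).
Proof. by elim: w => [|a w IH] //=; apply: red_cons_reduced. Qed.

Definition FG := {w : seq letter | reduced w}.

Definition FGone : FG := exist _ [::] erefl.
Definition FGmul (u v : FG) : FG := exist _ (nf (sval u ++ sval v)) (nf_reduced _).
Definition flip (a : letter) : letter := (a.1, ~~ a.2).
Definition FGinv (u : FG) : FG := exist _ (nf (rev (map flip (sval u)))) (nf_reduced _).

Definition FGgen (i : 'I_n) : FG := exist _ [:: (i, false)] erefl.

(* exponent sum of x_i in a word: the image in F_n/F_n' = Z^n, coordinate i *)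
Definition expsum (i : 'I_n) (w : seq letter) : int :=
  \sum_(a <- w) (if a.1 == i then (if a.2 then (-1)%R else 1%R) else 0%R).

Definition is_FGhom (f : FG -> FG) : Prop :=
  forall u v, f (FGmul u v) = FGmul (f u) (f v).

(* matrix of the automorphism of F_n/F_n' = Z^n induced by phi:
   column j is the image of x_j *)
Definition abmat (phi : FG -> FG) : 'M[int]_n :=
  \matrix_(i < n, j < n) expsum i (sval (phi (FGgen j))).

(* Semidirect product G_phi = F_n x| <t>, element (u, k) stands for u t^k,
   where t v t^-1 = phi v.  psi is the inverse of phi. *)
Definition iterz (phi psi : FG -> FG) (k : int) : FG -> FG :=
  match k with
  | Posz m => iter m phi
  | Negz m => iter m.+1 psi
  end.

Definition SD := (FG * int)%type.

Definition SDone : SD := (FGone, 0%R).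
Definition SDmul (phi psi : FG -> FG) (g h : SD) : SD :=
  (FGmul g.1 (iterz phi psi g.2 h.1), (g.2 + h.2)%R).
Definition SDinv (phi psi : FG -> FG) (g : SD) : SD :=
  (iterz phi psi (- g.2)%R (FGinv g.1), (- g.2)%R).
Definition SDcomm (phi psi : FG -> FG) (g h : SD) : SD :=
  SDmul phi psi (SDmul phi psi (SDinv phi psi g) (SDinv phi psi h))
        (SDmul phi psi g h).

Inductive gen (phi psi : FG -> FG) (S : SD -> Prop) : SD -> Prop :=
  | gen_one : gen phi psi S SDone
  | gen_mem g : S g -> gen phi psi S g
  | gen_mul g h : gen phi psi S g -> gen phi psi S h -> gen phi psi S (SDmul phi psi g h)
  | gen_inv g : gen phi psi S g -> gen phi psi S (SDinv phi psi g).

(* lcs k = gamma_{k+1}(G_phi) *)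
Fixpoint lcs (phi psi : FG -> FG) (k : nat) : SD -> Prop :=
  match k with
  | 0 => fun _ => True
  | k'.+1 => gen phi psi (fun x => exists a g, lcs phi psi k' a /\ x = SDcomm phi psi a g)
  end.

Definition gamma (phi psi : FG -> FG) (i : nat) : SD -> Prop := lcs phi psi i.-1.

Definition residually_nilpotent (phi psi : FG -> FG) : Prop :=
  forall g : SD, (forall i, (0 < i)%N -> gamma phi psi i g) -> g = SDone.

End FreeGroup.

(* Main.v *)
Require Import Defs.
From mathcomp Require Import all_boot all_order all_algebra.
Import GRing.Theory.
From mathcomp Require Import zify ring lra.
Import Order.TTheory GRing.Theory Num.Theory.
Set Implicit Arguments. Unset Strict Implicit. Unset Printing Implicit Defensive.

Section FGtheory.
Variable n : nat.
Implicit Types (u v w : FG n) (a b : letter n) (s t z : seq (letter n)).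

Lemma cancels_flip a b : cancels a b -> b = flip a.
Proof.
case: a b => [i x] [j y]; rewrite /cancels /flip /= => /andP[/eqP -> ].
by case: x; case: y.
Qed.

Lemma flipK : involutive (@flip n).
Proof. by case=> i x; rewrite /flip /= negbK. Qed.

Lemma cancels_flipr a : cancels a (flip a).
Proof. by rewrite /cancels /= eqxx; case: (a.2). Qed.

Lemma nf_id s : reduced s -> nf s = s.
Proof.
elim: s => [|a s IH] //= Hs.
rewrite IH ?(reduced_behead Hs) //.
by case: s Hs {IH} => //= b s /andP[/negbTE -> _].
Qed.

Lemma red_cons_flip a s : reduced s -> red_cons (flip a) (red_cons a s) = s.
Proof.
case: s => [|b s] /= Hs; first by rewrite -{2}(flipK a) cancels_flipr.
case: ifP => Hc.
  move: (cancels_flip Hc) Hs => ->.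
  by case: s => [|c s] //= /andP[/negbTE -> _].
by rewrite /= -{2}(flipK a) cancels_flipr.
Qed.

Lemma red_cons_flip' a s : reduced s -> red_cons a (red_cons (flip a) s) = s.
Proof. by move=> Hs; rewrite -{1}(flipK a) red_cons_flip. Qed.

Lemma foldr_reduced z s : reduced z -> reduced (foldr (@red_cons n) z s).
Proof. by move=> Hz; elim: s => //= a s IH; apply: red_cons_reduced. Qed.

Lemma fold_nf z s : reduced z -> foldr (@red_cons n) z (nf s) = foldr (@red_cons n) z s.
Proof.
move=> Hz; elim: s => [|a s IH] //=.
rewrite -IH; have := nf_reduced s.
case: (nf s) => [|b w] //= Hw.
case: ifP => Hc //.
rewrite (cancels_flip Hc) /= red_cons_flip' //.
exact: foldr_reduced.
Qed.

Lemma nf_cat s t : nf (s ++ t) = foldr (@red_cons n) (nf t) s.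
Proof. by rewrite /nf foldr_cat. Qed.

Lemma nf_catl s t : nf (nf s ++ t) = nf (s ++ t).
Proof. by rewrite !nf_cat fold_nf // nf_reduced. Qed.

Lemma nf_catr s t : nf (s ++ nf t) = nf (s ++ t).
Proof. by rewrite !nf_cat (nf_id (nf_reduced t)). Qed.

Lemma fold_inv z s : reduced z ->
  foldr (@red_cons n) (foldr (@red_cons n) z s) (rev (map (@flip n) s)) = z.
Proof.
move=> Hz; elim: s => [|a s IH] //=.
rewrite rev_cons -cats1 foldr_cat /= red_cons_flip //.
exact: foldr_reduced.
Qed.

Lemma nf_invl s : nf (rev (map (@flip n) s) ++ s) = [::].
Proof. by rewrite nf_cat fold_inv. Qed.

Lemma nf_invr s : nf (s ++ rev (map (@flip n) s)) = [::].
Proof.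
have := nf_invl (rev (map (@flip n) s)).
by rewrite map_rev revK -map_comp (eq_map flipK) map_id.
Qed.

Lemma FG_eq u v : sval u = sval v -> u = v.
Proof.
case: u v => [s Hs] [t Ht] /= E; subst t.
by rewrite (eq_irrelevance Hs Ht).
Qed.

Notation "u ** v" := (FGmul u v) (at level 40, left associativity).
Notation one := (FGone n).

Lemma mulA u v w : u ** (v ** w) = u ** v ** w.
Proof. by apply: FG_eq; rewrite /= nf_catl nf_catr catA. Qed.

Lemma mul1 u : one ** u = u.
Proof. by apply: FG_eq; rewrite /= nf_id //; case: u. Qed.

Lemma mulr1 u : u ** one = u.
Proof. by apply: FG_eq; rewrite /= cats0 nf_id //; case: u. Qed.

Lemma mulV u : FGinv u ** u = one.
Proof. apply: FG_eq; case: u => s Hs /=. by rewrite nf_catl nf_invl. Qed.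

Lemma mulVr u : u ** FGinv u = one.
Proof. apply: FG_eq; case: u => s Hs /=. by rewrite nf_catr nf_invr. Qed.

Lemma mulK u v : FGinv u ** (u ** v) = v.
Proof. by rewrite mulA mulV mul1. Qed.

Lemma mulKV u v : u ** (FGinv u ** v) = v.
Proof. by rewrite mulA mulVr mul1. Qed.

Lemma inv_uniq u v : u ** v = one -> v = FGinv u.
Proof. by move=> E; rewrite -(mulK u v) E mulr1. Qed.

Lemma invK u : FGinv (FGinv u) = u.
Proof. by apply: esym; apply: inv_uniq; apply: mulV. Qed.

Lemma invM u v : FGinv (u ** v) = FGinv v ** FGinv u.
Proof.
apply: esym; apply: inv_uniq.
by rewrite mulA -(mulA u) mulVr mulr1 mulVr.
Qed.

Lemma inv1 : FGinv one = one.
Proof. by apply: FG_eq. Qed.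

Lemma hom1 (f : FG n -> FG n) : is_FGhom f -> f one = one.
Proof.
move=> Hf; have := Hf one one; rewrite mul1 => E.
by rewrite -(mulK (f one) (f one)) -E mulV.
Qed.

Open Scope ring_scope.
Definition ctr (i : 'I_n) (a : letter n) : int :=
  if a.1 == i then (if a.2 then (-1)%R else 1%R) else 0%R.

Lemma expsum_cons i a s : expsum i (a :: s) = ctr i a + expsum i s.
Proof. by rewrite /expsum big_cons. Qed.

Lemma expsum_cat i s t : expsum i (s ++ t) = expsum i s + expsum i t.
Proof. by rewrite /expsum big_cat. Qed.

Lemma ctr_flip i a : ctr i (flip a) = - ctr i a.
Proof. by rewrite /ctr /=; case: (_ == _) => //; case: (a.2). Qed.

Lemma expsum_red_cons i a s : expsum i (red_cons a s) = ctr i a + expsum i s.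
Proof.
case: s => [|b s] /=; first by rewrite expsum_cons.
case: ifP => Hc; last by rewrite expsum_cons.
by rewrite !expsum_cons (cancels_flip Hc) ctr_flip addrA addrN add0r.
Qed.

Lemma expsum_nf i s : expsum i (nf s) = expsum i s.
Proof.
elim: s => [|a s IH] //=.
by rewrite expsum_red_cons IH expsum_cons.
Qed.

Lemma expsum_inv i s : expsum i (rev (map (@flip n) s)) = - expsum i s.
Proof.
rewrite /expsum big_rev big_map -sumrN; apply: eq_bigr => a _.
exact: ctr_flip.
Qed.

Definition Fw s : FG n := exist _ (nf s) (nf_reduced s).

Lemma Fw_cat s t : Fw (s ++ t) = Fw s ** Fw t.
Proof. by apply: FG_eq; rewrite /= nf_catl nf_catr. Qed.

Lemma Fw_val u : Fw (sval u) = u.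
Proof. by apply: FG_eq; case: u => s Hs /=; rewrite nf_id. Qed.

Lemma Fw_flip a : Fw [:: flip a] = FGinv (Fw [:: a]).
Proof. by apply: FG_eq. Qed.

Lemma sign_lemma i (b : bool) s : (i, b) \notin s ->
  0 <= ctr i (i, ~~ b) * expsum i s.
Proof.
move=> Hs; rewrite /expsum mulr_sumr big_seq; apply: sumr_ge0 => a Ha.
rewrite /ctr /= eqxx; case: eqP => [Ea|] /=; last by rewrite mulr0.
have -> : a.2 = ~~ b.
  case: a Ha Ea => j x /= Ha Ej; subst j.
  by move: Hs Ha; case: b; case: x => // /negP H /H.
by case: (b).
Qed.

Lemma ker_in (K : FG n -> Prop) : K one ->
  (forall u v, K u -> K v -> K (u ** v)) ->
  (forall (x y : FG n), K ((FGinv x ** FGinv y) ** (x ** y))) ->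
  forall s, (forall i, expsum i s = 0) -> K (Fw s).
Proof.
move=> K1 KM KC s.
elim: {s}(size s) {-2}s (leqnn (size s)) => [|m IH].
  by case=> // _ _; have -> : Fw [::] = one by apply: FG_eq.
case=> [|l s] Hsz Hs; first by have -> : Fw [::] = one by apply: FG_eq.
have Hin : flip l \in s.
  apply/negPn/negP => Hn.
  have := sign_lemma Hn; have := Hs l.1.
  rewrite expsum_cons /ctr /= eqxx => /eqP; case: (l.2);
    rewrite ?negbK /= ?(addrC (-1)) ?(addrC 1) ?subr_eq0 ?addr_eq0 => /eqP ->;
    by rewrite ?mulN1r ?mul1r ?opprK.
case/splitPr: Hin Hsz Hs => bb g Hsz Hs.
have Hbg : K (Fw (bb ++ g)).
  apply: IH; first by move: Hsz; rewrite /= !size_cat /= addnS ltnS => /ltnW.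
  move=> i; have := Hs i.
  rewrite expsum_cons !expsum_cat expsum_cons ctr_flip; lia.
have -> : Fw (l :: bb ++ flip l :: g) =
   (FGinv (FGinv (Fw [:: l])) ** FGinv (FGinv (Fw bb))) **
   (FGinv (Fw [:: l]) ** FGinv (Fw bb)) ** Fw (bb ++ g).
  rewrite !invK -cat1s !Fw_cat -(cat1s (flip l)) Fw_cat Fw_flip.
  by rewrite -!mulA; congr (_ ** (_ ** (_ ** _))); rewrite mulK.
by apply: KM.
Qed.

End FGtheory.

Section Main.
Variable n : nat.
Variables phi psi : FG n -> FG n.
Hypothesis Hhom : is_FGhom phi.
Hypothesis Hunit : (abmat phi - 1%:M)%R \in unitmx.
Notation "u ** v" := (FGmul u v) (at level 40, left associativity).
Notation one := (FGone n).
Open Scope ring_scope.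

Lemma SDmul0 u v : SDmul phi psi (u, 0) (v, 0) = (u ** v, 0).
Proof. by rewrite /SDmul /= addr0. Qed.

Lemma SDinv0 u : SDinv phi psi (u, 0) = (FGinv u, 0).
Proof. by rewrite /SDinv /= oppr0. Qed.

Lemma SDcomm0 a g : SDcomm phi psi (a, 0) (g, 0) =
  ((FGinv a ** FGinv g) ** (a ** g), 0).
Proof. by rewrite /SDcomm !SDinv0 !SDmul0. Qed.

Lemma SDcommt v : SDcomm phi psi (v, 0) (one, -1) = (FGinv v ** phi v, 0).
Proof.
rewrite /SDcomm SDinv0.
have -> : SDinv phi psi (one, -1) = (one, 1).
  by rewrite /SDinv /= opprK inv1 (hom1 Hhom).
by rewrite /SDmul /= !mulr1 !add0r addrN.
Qed.

Definition ev (w : FG n) : 'cV[int]_n := \col_i expsum i (sval w).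

Lemma ev_mul u v : ev (u ** v) = ev u + ev v.
Proof. by apply/matrixP => i j; rewrite !mxE /= expsum_nf expsum_cat. Qed.

Lemma ev_inv u : ev (FGinv u) = - ev u.
Proof. by apply/matrixP => i j; rewrite !mxE /= expsum_nf expsum_inv. Qed.

Lemma ev_one : ev one = 0.
Proof. by apply/matrixP => i j; rewrite !mxE /expsum big_nil. Qed.

Lemma mul_sum_col m (M : 'M[int]_(m, n)) (v : 'cV[int]_n) :
  M *m v = \sum_k v k 0 *: col k M.
Proof.
apply/matrixP => i j; rewrite !mxE summxE; apply: eq_bigr => k _.
by rewrite !mxE (ord1 j) mulrC.
Qed.

Lemma allF i u : lcs phi psi i (u, 0).
Proof.
elim: i u => [|i IH] u //=.
pose S := fun x => exists a g, lcs phi psi i a /\ x = SDcomm phi psi a g.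
pose K := fun u => gen phi psi S (u, 0).
change (K u).
have K1 : K one by apply: gen_one.
have KM : forall u v, K u -> K v -> K (u ** v).
  by move=> x y Hx Hy; rewrite /K -SDmul0; apply: gen_mul.
have KI : forall u, K u -> K (FGinv u).
  by move=> x Hx; rewrite /K -SDinv0; apply: gen_inv.
have KC : forall x y : FG n, K ((FGinv x ** FGinv y) ** (x ** y)).
  move=> x y; rewrite /K -SDcomm0; apply: gen_mem.
  by exists (x, 0), (y, 0); split.
have KT : forall v, K (FGinv v ** phi v).
  move=> v; rewrite /K -SDcommt; apply: gen_mem.
  by exists (v, 0), (one, -1); split.
pose L := fun c => exists w, K w /\ ev w = c.
have L0 : L 0 by exists one; rewrite ev_one.
have LD : forall c d, L c -> L d -> L (c + d).
  move=> c d [x [Kx <-]] [y [Ky <-]]; exists (x ** y); split; first exact: KM.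
  by rewrite ev_mul.
have LN : forall c, L c -> L (- c).
  move=> c [x [Kx <-]]; exists (FGinv x); split; first exact: KI.
  by rewrite ev_inv.
have LZ : forall (z : int) c, L c -> L (z *: c).
  move=> z c Hc.
  have LP : forall m : nat, L ((m%:Z) *: c).
    elim=> [|m IHm]; first by rewrite scale0r.
    by rewrite -[m.+1]addn1 PoszD scalerDl scale1r; apply: LD.
  case: z => m; first exact: LP.
  by rewrite NegzE scaleNr; apply: LN; apply: LP.
set M := abmat phi - 1%:M.
have Lcol : forall k, L (col k M).
  move=> k; exists (FGinv (FGgen k) ** phi (FGgen k)); split; first exact: KT.
  apply/matrixP => a b; rewrite !mxE /= expsum_red_cons expsum_nf ctr_flip addrC.
  congr (_ + _); congr (- _); rewrite /ctr /= eq_sym; by case: eqP.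
have Lall : forall c, L c.
  move=> c; have -> : c = M *m (invmx M *m c) by rewrite mulmxA mulmxV // mul1mx.
  rewrite mul_sum_col; apply: (big_ind L) => //.
  by move=> k _; apply: LZ.
have [w [Kw Ew]] := Lall (ev u).
pose d := FGinv u ** w.
have Kd : K d.
  rewrite -(Fw_val d); apply: ker_in => // a.
  have : ev d = 0 by rewrite ev_mul ev_inv Ew addNr.
  by move/matrixP => /(_ a 0); rewrite !mxE.
have -> : u = w ** FGinv d by rewrite /d invM invK mulKV.
by apply: KM => //; apply: KI.
Qed.

End Main.

Theorem proposition2p3 (n : nat) (phi psi : FG n -> FG n) :
  (2 <= n)%N ->
  is_FGhom phi -> cancel phi psi -> cancel psi phi ->
  (abmat phi - 1%:M)%R \in unitmx ->
  (forall g : SD n,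
     (forall i, (0 < i)%N -> gamma phi psi i g) <-> g.2 = 0%R)
  /\ ~ residually_nilpotent phi psi.
Proof.
move=> Hn Hhom _ _ Hunit.
have Hiff : forall g : SD n,
     (forall i, (0 < i)%N -> gamma phi psi i g) <-> g.2 = 0%R.
  move=> g; split.
    move=> /(_ 2 erefl) /=.
    elim=> [|x [a [h [_ ->]]]|x y _ Hx _ Hy|x _ Hx] //=.
    - by rewrite /SDcomm /SDmul /SDinv /=; lia.
    - by rewrite Hx Hy addr0.
    - by rewrite Hx oppr0.
  case: g => u k /= -> i _; exact: allF.
split=> // Hres.
have n0 : (0 < n)%N by apply: leq_trans Hn.
have := Hres (FGgen (Ordinal n0), 0%R).
have H : (forall i, (0 < i)%N -> gamma phi psi i (FGgen (Ordinal n0), 0%R)).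
  by move=> i _; exact: allF.
by move=> /(_ H) E; move: (congr1 (fun g : SD n => size (sval g.1)) E).
Qed.
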